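(* Let $q$ be a power of an odd prime, $k\ge2$, $0<r_1<r_2<\cdots<r_k<n$ integers, $a_1,\dots,a_k\in\mathbb{F}_{q^n}^*$ with the multiplicative order of $a_i$ dividing $q^{r_1}-1$ for all $i=2,\dots,k$, and $S(x)=\sum_{i=1}^k a_ix^{q^{r_i}}$. Then the following are equivalent: (1) $S(x)$ is a scattered polynomial of index $r_1$ over $\mathbb{F}_{q^n}$; (2) $S_{r_1}(x)=S(x)-a_1x^{q^{r_1}}=\sum_{i=2}^k a_ix^{q^{r_i}}$ is a scattered polynomial of index $r_1$ over $\mathbb{F}_{q^n}$; (3) $S^{r_1}_{r_1}(x)=\sum_{i=2}^k a_ix^{q^{r_i-r_1}}$ is a scattered polynomial of index $0$ over $\mathbb{F}_{q^n}$.
   Context: An $\mathbb{F}_q$-linearized polynomial $S\in\mathbb{F}_{q^n}[x]$ is a scattered polynomial of index $t$ over $\mathbb{F}_{q^n}$ if for all $y,z\in\mathbb{F}_{q^n}^*$, $\frac{S(y)}{y^{q^t}}=\frac{S(z)}{z^{q^t}}$ implies $y/z\in\mathbb{F}_q$. *)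

(* Defs.v *)
From HB Require Import structures.
From mathcomp Require Import all_boot all_order all_algebra all_field.
Set Implicit Arguments. Unset Strict Implicit. Unset Printing Implicit Defensive.
Import GRing.Theory.
Local Open Scope ring_scope.

(* F plays the role of F_{q^n} (the statement assumes #|F| = q^n with q a
   power of the characteristic); then F_q is exactly the set of x with x^q = x. *)
Definition in_Fq (F : finFieldType) (q : nat) (x : F) : bool := x ^+ q == x.

Definition linpoly (F : finFieldType) (q : nat) (a : nat -> F) (e : nat -> nat)
  (lo hi : nat) (x : F) : F :=
  \sum_(lo <= i < hi) a i * x ^+ (q ^ e i).

Definition scattered (F : finFieldType) (q t : nat) (S : F -> F) : Prop :=
  forall y z : F, y != 0 -> z != 0 ->
    S y / y ^+ (q ^ t) = S z / z ^+ (q ^ t) -> in_Fq q (y / z).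

(* Main.v *)
Require Import Defs.
From HB Require Import structures.
From mathcomp Require Import all_boot all_order all_algebra all_field.
Local Open Scope ring_scope.
Import GRing.Theory.

Lemma frob_sum (F : finFieldType) (N lo hi : nat) (f : nat -> F) :
  [pchar F].-nat N ->
  (\sum_(lo <= i < hi) f i) ^+ N = \sum_(lo <= i < hi) f i ^+ N.
Proof.
move=> hN.
apply: (big_rec2 (fun x y => x ^+ N = y)).
  by rewrite expr0n; case: N hN => [|N] //; rewrite /pnat ltnn.
by move=> i x y _ <-; rewrite exprDn_pchar.
Qed.

Lemma frob_inj (F : finFieldType) (q n t : nat) (x y : F) :
  #|F| = (q ^ n)%N -> (t <= n)%N -> x ^+ (q ^ t) = y ^+ (q ^ t) -> x = y.
Proof.
move=> hF htn hxy.
have: (x ^+ (q ^ t)) ^+ (q ^ (n - t)) = (y ^+ (q ^ t)) ^+ (q ^ (n - t)) by rewrite hxy.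
by rewrite -!exprM -expnD subnKC // -hF !expf_card.
Qed.

Theorem mainTheorem5 (F : finFieldType) (p e q n k : nat)
    (a : nat -> F) (r : nat -> nat) :
  prime p -> odd p -> (0 < e)%N -> q = (p ^ e)%N ->
  #|F| = (q ^ n)%N ->
  (2 <= k)%N ->
  (0 < r 0%N)%N ->
  (forall i j : nat, (i < j)%N -> (j < k)%N -> (r i < r j)%N) ->
  (r k.-1 < n)%N ->
  (forall i : nat, (i < k)%N -> a i != 0) ->
  (forall i : nat, (1 <= i < k)%N ->
     exists2 d : nat, d.-primitive_root (a i) & (d %| q ^ r 0%N - 1)%N) ->
  [<-> scattered q (r 0%N) (linpoly q a r 0 k);
       scattered q (r 0%N) (linpoly q a r 1 k);
       scattered q 0 (linpoly q a (fun i => (r i - r 0%N)%N) 1 k)].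
Proof.
move=> pp op e0 qE hF k2 r0 rinc rn anz aord.
set t := r 0%N.
have hk1 : (0 < k)%N by apply: leq_trans k2.
have ht : (t <= n)%N.
  apply: ltnW; apply: leq_ltn_trans rn.
  case: (posnP k.-1) => [->//|kp]; apply: ltnW; apply: rinc => //.
  by rewrite prednK.
have pchF : p \in [pchar F].
  by apply: (@card_finPcharP _ p (e * n)); rewrite // hF qE expnM.
have pnatq : forall m : nat, [pchar F].-nat (q ^ m)%N.
  move=> m; rewrite qE -expnM pnatX; apply/orP; left.
  by rewrite pnatE.
have E1 : forall y : F, y != 0 ->
    linpoly q a r 0 k y / y ^+ (q ^ t) = a 0%N + linpoly q a r 1 k y / y ^+ (q ^ t).
  move=> y y0; rewrite /linpoly big_ltn // mulrDl -mulrA mulfV ?mulr1 //.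
  by rewrite expf_neq0.
have aq : forall i, (1 <= i < k)%N -> a i ^+ (q ^ t) = a i.
  move=> i hi; have [d dpr dd] := aord i hi.
  have d0 : (0 < d)%N by apply: prim_order_gt0 dpr.
  have qt0 : (0 < q ^ t)%N by rewrite expn_gt0 qE expn_gt0 prime_gt0.
  rewrite -{1}(subnK qt0) exprD expr1.
  move: dd => /dvdnP [c ->]; rewrite mulnC exprM (prim_expr_order dpr) expr1n.
  by rewrite mul1r.
have E2 : forall y : F, y != 0 ->
    linpoly q a r 1 k y / y ^+ (q ^ t) =
    (linpoly q a (fun i => (r i - t)%N) 1 k y / y ^+ (q ^ 0)) ^+ (q ^ t).
  move=> y y0; rewrite expn0 expr1 exprMn exprVn /linpoly frob_sum //.
  congr (_ / _); apply: eq_big_nat => i hi.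
  have hi' := hi; case/andP: hi' => hi1 hi2.
  rewrite exprMn aq // -exprM -expnD subnK //; apply: ltnW; exact: rinc hi1 hi2.
split; [|split].
- move=> H y z y0 z0 hyz; apply: H => //.
  by rewrite !E1 // hyz.
- move=> H y z y0 z0 hyz; apply: H => //.
  by rewrite !E2 // hyz.
- move=> H y z y0 z0 hyz; apply: H => //.
  have hyz2 : linpoly q a r 1 k y / y ^+ (q ^ t) = linpoly q a r 1 k z / z ^+ (q ^ t).
    by apply: (addrI (a 0%N)); rewrite -!E1.
  by move: hyz2; rewrite !E2 // => /(@frob_inj _ _ _ _ _ _ hF ht) ->.
Qed.
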